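(* Let $(\vec S,\le,{}^* )$ be a separation system, let $\mathcal F\subseteq 2^{\vec S}$ be a set of stars, and let $(T,\alpha)$ be an irredundant $S$-tree over $\mathcal F$. Let $e,f$ be distinct edges of $T$ with orientations $\vec e<\overleftarrow f$ (in the natural partial ordering of $\vec E(T)$) such that $\alpha(\vec e)=\alpha(\vec f)=:\vec r$. Then $\vec r$ is trivial in $\vec S$. In particular, $T$ cannot have two distinct leaves both associated with the same star $\{\overleftarrow r\}$ unless $\vec r$ is trivial, or $T$ has only one edge $e$ and $\alpha(\vec e)=\alpha(\overleftarrow e)$ is degenerate.
   Context: A separation system $(\vec S,\le,{}^* )$ is a partially ordered set $\vec S$ together with an involution ${}^*$ that is order-reversing, i.e. $\vec r\le\vec s\iff \vec r^{\,*}\ge\vec s^{\,*}$. For $\vec s\in\vec S$ we write $\overleftarrow s:=\vec s^{\,*}$. A separation is a set $s=\{\vec s,\overleftarrow s\}$; $S$ denotes the set of all separations; $s$ and $\vec s$ are degenerate if $\vec s=\overleftarrow s$. An element $\vec r\in\vec S$ is trivial in $\vec S$ if there is $s\in S$ with $\vec r<\vec s$ and $\vec r<\overleftarrow s$. A star is a nonempty set $\sigma\subseteq\vec S$ such that $\vec r\le\overleftarrow s$ for all distinct $\vec r,\vec s\in\sigma$. An $S$-tree is a pair $(T,\alpha)$ where $T$ is a finite tree with at least one edge and $\alpha:\vec E(T)\to\vec S$, with $\vec E(T)=\{(x,y):\{x,y\}\in E(T)\}$, satisfies $\alpha(y,x)=\alpha(x,y)^*$ for every edge $xy$. For a node $t$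 let $\vec F_t=\{(x,t):xt\in E(T)\}$; $\alpha(\vec F_t)$ is said to be associated with $t$. The $S$-tree is over $\mathcal F\subseteq 2^{\vec S}$ if $\alpha(\vec F_t)\in\mathcal F$ for every node $t$. It is redundant if some node $t$ has distinct neighbours $t',t''$ with $\alpha(t',t)=\alpha(t'',t)$, and irredundant otherwise. The natural partial ordering on $\vec E(T)$ is defined by $(x,y)<(u,v)$ if $\{x,y\}\neq\{u,v\}$ and the unique path in $T$ that meets $\{x,y\}$ only in its first vertex and $\{u,v\}$ only in its last vertex starts at $y$ and ends at $u$. For an edge $e=xy$, $\vec e$ and $\overleftarrow e$ denote its two orientations $(x,y),(y,x)$. *)

(* Defs.v *)
From mathcomp Require Import all_boot.
Set Implicit Arguments. Unset Strict Implicit. Unset Printing Implicit Defensive.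

Record sepsys := SepSys {
  sep_car :> Type;
  sep_le : sep_car -> sep_car -> Prop;
  sep_inv : sep_car -> sep_car;
  sep_le_refl : forall x, sep_le x x;
  sep_le_antisym : forall x y, sep_le x y -> sep_le y x -> x = y;
  sep_le_trans : forall x y z, sep_le x y -> sep_le y z -> sep_le x z;
  sep_inv_invol : forall x, sep_inv (sep_inv x) = x;
  sep_inv_rev : forall x y, sep_le x y <-> sep_le (sep_inv y) (sep_inv x)
}.

Definition sep_lt (S : sepsys) (x y : S) : Prop := sep_le x y /\ x <> y.

Definition trivial_sep (S : sepsys) (r : S) : Prop :=
  exists s : S, sep_lt r s /\ sep_lt r (sep_inv s).

Definition degenerate (S : sepsys) (s : S) : Prop := sep_inv s = s.

Definition is_star (S : sepsys) (sigma : S -> Prop) : Prop :=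
  (exists r, sigma r) /\
  forall r s, sigma r -> sigma s -> r <> s -> sep_le r (sep_inv s).

Definition is_tree (T : finType) (adj : rel T) : Prop :=
  symmetric adj /\ irreflexive adj /\
  (forall x y : T, connect adj x y) /\
  (forall p : seq T, uniq p -> 3 <= size p -> ~~ cycle adj p) /\
  (exists x y, adj x y).

Definition is_Stree (S : sepsys) (T : finType) (adj : rel T) (alpha : T -> T -> S) :=
  is_tree adj /\ forall x y, adj x y -> alpha y x = sep_inv (alpha x y).

Definition assoc_star (S : sepsys) (T : finType) (adj : rel T) (alpha : T -> T -> S)
  (t : T) : S -> Prop := fun s => exists x, adj x t /\ s = alpha x t.

Definition Stree_over (S : sepsys) (T : finType) (adj : rel T) (alpha : T -> T -> S)
  (F : (S -> Prop) -> Prop) : Prop := forall t, F (assoc_star adj alpha t).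

Definition irredundant (S : sepsys) (T : finType) (adj : rel T) (alpha : T -> T -> S) :=
  forall t t' t'', adj t' t -> adj t'' t -> t' <> t'' -> alpha t' t <> alpha t'' t.

Definition same_edge (T : Type) (x y u v : T) : Prop :=
  (x = u /\ y = v) \/ (x = v /\ y = u).

(** Natural partial ordering on oriented edges: (x,y) < (u,v) iff {x,y} <> {u,v}
    and the path meeting {x,y} only in its first vertex and {u,v} only in its last
    vertex starts at y and ends at u. *)
Definition edge_lt (T : finType) (adj : rel T) (x y u v : T) : Prop :=
  ~ same_edge x y u v /\
  exists p : seq T, [/\ path adj y p, last y p = u, uniq (y :: p),
                        x \notin y :: p & v \notin y :: p].

(* Main.v *)
Require Import Defs.
From mathcomp Require Import all_boot.
From Stdlib Require Import Classical.

Lemma inv_inj (S : sepsys) (x y : S) : sep_inv x = sep_inv y -> x = y.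
Proof. by move=> H; rewrite -(sep_inv_invol x) H sep_inv_invol. Qed.

Section Proofs.
Variables (S : sepsys) (T : finType) (adj : rel T) (alpha : T -> T -> S).
Hypothesis HS : symmetric adj.
Hypothesis Hal : forall x y, adj x y -> alpha y x = sep_inv (alpha x y).
Hypothesis Hirr : irredundant adj alpha.
Hypothesis Hst : forall t x y, adj x t -> adj y t -> x <> y ->
  sep_le (alpha x t) (sep_inv (alpha y t)).

Lemma back_le p : forall b u, path adj b (u::p) -> uniq (b::u::p) ->
  forall c, adj c (last u p) -> c \notin b::u::p ->
  sep_le (alpha c (last u p)) (alpha u b).
Proof.
elim: p => [|w p IH] b u /=.
- move=> /andP[Hbu _] Hu c Hc Hcn. rewrite (Hal _ _ Hbu). apply: Hst => //.
  move=> E; move: Hcn; by rewrite E inE eqxx.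
- move=> /andP[Hbu Hp] Hu c Hc Hcn.
  have H1 := IH u w Hp.
  move: Hu => /andP[Hb Hu].
  have H2 := H1 Hu c Hc.
  apply: sep_le_trans (H2 _) _.
    by move: Hcn; rewrite !inE negb_or => /andP[_].
  rewrite (Hal _ _ Hbu). apply: Hst.
  + by rewrite HS; move: Hp => /= /andP[].
  + exact: Hbu.
  + move=> E; move: Hb; by rewrite E !inE eqxx orbT.
Qed.

Lemma main_ind c d p : forall a b, adj a b -> adj c d -> path adj b p -> last b p = d ->
  uniq (b::p) -> a \notin b::p -> c \notin b::p -> ~ (a = c /\ b = d) ->
  alpha a b = alpha c d -> trivial_sep (alpha a b).
Proof.
elim: p => [|p1 p IH] a b Hab Hcd /=.
- move=> _ Hbd _ _ _ Hac E; subst b. exfalso.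
  apply: (Hirr _ _ _ Hab Hcd _ E) => E'; apply: Hac; by split.
- move=> /andP[Hbp Hp] Hl Hu Ha Hc _ E.
  have Hpb : adj p1 b by rewrite HS.
  have Hap : a <> p1 by move=> E'; move: Ha; rewrite E' !inE eqxx orbT.
  have Hne := Hirr _ _ _ Hab Hpb Hap.
  case: (classic (alpha a b = alpha b p1)) => Hs.
  + rewrite Hs; apply: (IH b p1) => //.
    * by move: Hu => /andP[].
    * by move: Hu => /andP[].
    * by move: Hc; rewrite inE negb_or => /andP[].
    * case=> E1 _; move: Hc; by rewrite E1 inE eqxx.
    * by rewrite -Hs.
  + exists (alpha b p1); split; split => //.
    * have := Hst _ _ _ Hab Hpb Hap. by rewrite (Hal _ _ Hbp) sep_inv_invol.
    * rewrite E -Hl -(Hal _ _ Hbp). apply: back_le => //=.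
      -- by rewrite Hbp.
      -- by rewrite -Hl in Hcd.
    * by rewrite -(Hal _ _ Hbp).
Qed.
End Proofs.
Theorem lemma2p3 (S : sepsys) (F : (S -> Prop) -> Prop) (T : finType) (adj : rel T)
  (alpha : T -> T -> S) :
  (forall sigma, F sigma -> is_star sigma) ->
  is_Stree adj alpha -> Stree_over adj alpha F -> irredundant adj alpha ->
  (* main claim: e = ab, f = cd, e->=(a,b), f->=(c,d), e-> < f<- *)
  (forall a b c d : T, adj a b -> adj c d -> ~ same_edge a b c d ->
     edge_lt adj a b d c -> alpha a b = alpha c d -> trivial_sep (alpha a b)) /\
  (* in particular: two distinct leaves associated with the same star {r<-} *)
  (forall (r : S) (t1 t2 x1 x2 : T), t1 <> t2 ->
     (forall y, adj y t1 <-> y = x1) -> (forall y, adj y t2 <-> y = x2) ->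
     alpha x1 t1 = sep_inv r -> alpha x2 t2 = sep_inv r ->
     trivial_sep r \/
     ((forall u v, adj u v -> same_edge u v t1 t2) /\ degenerate (alpha t1 t2))).
Proof.
move=> HF [[HS [Hirrf [Hconn [_ _]]]] Hal] Hov Hirr.
have Hst : forall t x y, adj x t -> adj y t -> x <> y ->
    sep_le (alpha x t) (sep_inv (alpha y t)).
  move=> t x y Hx Hy Hxy. have [_ H] := HF _ (Hov t).
  apply: H; [by exists x | by exists y | exact: Hirr].
have Main : forall a b c d : T, adj a b -> adj c d -> ~ same_edge a b c d ->
     edge_lt adj a b d c -> alpha a b = alpha c d -> trivial_sep (alpha a b).
  move=> a b c d Hab Hcd Hne [_ [p [Hp Hl Hu Ha Hc]]] E.
  apply: (@main_ind S T adj alpha HS Hal Hirr Hst c d p a b) => //.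
  by move=> [E1 E2]; apply: Hne; left.
split=> //.
move=> r t1 t2 x1 x2 Ht H1 H2 E1 E2.
have A1 : adj x1 t1 by apply/H1.
have A2 : adj x2 t2 by apply/H2.
have Hinvr : forall x t, adj t x -> alpha x t = sep_inv r -> alpha t x = r.
  move=> x t Htx Ex. apply: inv_inj. by rewrite -Ex (Hal _ _ Htx).
case: (eqVneq x1 t2) => Hx1.
- right. subst x1.
  have Ex2 : t1 = x2 by apply/H2; rewrite HS.
  subst x2.
  have Pall : forall z, z = t1 \/ z = t2.
    move=> z. have /connectP [p Hp ->] := Hconn t1 z.
    have Hcl : forall y z, adj y z -> y = t1 \/ y = t2 -> z = t1 \/ z = t2.
      move=> y w Hyw [E|E]; subst y.
      * by right; apply/H1; rewrite HS.
      * by left; apply/H2; rewrite HS.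
    have Gen : forall p x, path adj x p -> x = t1 \/ x = t2 ->
        last x p = t1 \/ last x p = t2.
      elim=> [|w q IH] x //= /andP[Hxw Hq] Px.
      apply: IH Hq _. exact: Hcl Hxw Px.
    by apply: Gen Hp _; left.
  split.
  + move=> u v Huv.
    have Nuv : u <> v by move=> E; move: Huv; rewrite E Hirrf.
    rewrite /same_edge.
    case: (Pall u) => Eu; case: (Pall v) => Ev; subst u v;
      first [by case: Nuv | by left | by right].
  + have := Hal _ _ A1; rewrite E1 E2 sep_inv_invol => H.
    by rewrite /degenerate H H.
- left.
  move: (Hconn x1 t2) => /connectP [p Hp Hl].
  move: Hl; case: (shortenP Hp) => q Hq Hu _ /esym Hlq.
  have Nt1 : t1 \notin x1 :: q.
    rewrite inE negb_or; apply/andP; split.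
      by apply/eqP => E; move: A1; rewrite E Hirrf.
    apply/negP => Hin.
    move: Hq Hu Hlq; case/splitPr: Hin => q1 q2.
    rewrite cat_path last_cat /= => /andP[_ Hq2] Hu.
    case: q2 Hq2 Hu => [|z q2] /=.
      by move=> _ _ E; apply: Ht.
    move=> /and3P[_ Htz _] Hu _.
    have Ez : z = x1 by apply/H1; rewrite HS.
    move: Hu; rewrite Ez => /andP[+ _].
    by rewrite mem_cat !inE eqxx !orbT.
  move: Hq Hu Hlq Nt1; case/lastP: q => [|q0 z].
    by move=> _ _ /= E; rewrite E eqxx in Hx1.
  rewrite last_rcons => + + Ez; rewrite Ez.
  rewrite rcons_path -rcons_cons rcons_uniq => /andP[Hq0 Hl0] /andP[Ht2 Hu0] Nt1.
  have El : last x1 q0 = x2 by apply/H2.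
  have Ht1x1 : adj t1 x1 by rewrite HS.
  have Ht2x2 : adj t2 x2 by rewrite HS.
  have Et1 := Hinvr x1 t1 Ht1x1 E1.
  have Et2 := Hinvr x2 t2 Ht2x2 E2.
  rewrite -Et1. apply: (Main t1 x1 t2 x2) => //.
  + case=> [[E _]|[E E']]; [exact: Ht E | by rewrite E' eqxx in Hx1].
  + split.
      case=> [[E E']|[E E']]; [by rewrite E' eqxx in Hx1 | exact: Ht E].
    exists q0; split => //.
    apply/negP => H; move/negP: Nt1; apply; move: H.
    rewrite !inE mem_rcons !inE => /orP[->|->]; by rewrite ?orbT.
  + by rewrite Et1 Et2.
Qed.
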